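(* Let $\bm{G}_t\in\mathbb{R}^{n_1\times n_2}$, $\epsilon_t>0$, $\bm{L}_t=\epsilon_t\bm{I}_{n_1}+\mathrm{diag}(\bm{G}_t\bm{G}_t^T)$, $\bm{R}_t=\epsilon_t\bm{I}_{n_2}+\mathrm{diag}(\bm{G}_t^T\bm{G}_t)$, $\nu_t=\epsilon_t^{1/2}$, $\mu_t=(\epsilon_t+\|\bm{G}_t\|_\vee^2)^{1/2}$. Let $\bm{Z}_1,\bm{Z}_2\in\mathbb{R}^{n_1\times n_2}$ have ranks $r_1$ and $r_2$ with $r_1+r_2\le\min\{n_1,n_2\}$ and $\langle\bm{Z}_1,\bm{Z}_2\rangle_{\mathcal{W}_t}=0$. Assume the linear operator $\mathcal{A}:\mathbb{R}^{n_1\times n_2}\to\mathbb{R}^m$ satisfies the restricted isometry property of order $r_1+r_2$ with constant $\delta_{r_1+r_2}$. Then $$|\langle\mathcal{A}\bm{Z}_1,\mathcal{A}\bm{Z}_2\rangle|\le\frac12\Big((\nu_t^{-1}-\mu_t^{-1})+(\nu_t^{-1}+\mu_t^{-1})\delta_{r_1+r_2}\Big)\|\bm{Z}_1\|_{\mathcal{W}_t}\|\bm{Z}_2\|_{\mathcal{W}_t}.$$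
   Context: Restricted isometry property of order $s$: there is $\delta_s\in(0,1)$ with $(1-\delta_s)\|\bm{Z}\|_F^2\le\|\mathcal{A}\bm{Z}\|_2^2\le(1+\delta_s)\|\bm{Z}\|_F^2$ for all $\bm{Z}$ of rank at most $s$. $\langle\bm{Z},\bm{Y}\rangle_{\mathcal{W}_t}=\langle\bm{L}_t^{1/4}\bm{Z}\bm{R}_t^{1/4},\bm{Y}\rangle$ with $\langle\bm{A},\bm{B}\rangle=\mathrm{trace}(\bm{A}^T\bm{B})$; $\|\cdot\|_{\mathcal{W}_t}$ is the induced norm. $\|\bm{Z}\|_\vee=\max\{\max_i\|\bm{Z}(i,:)\|_2,\max_j\|\bm{Z}(:,j)\|_2\}$. *)

(* Defs.v *)
From HB Require Import structures.
From mathcomp Require Import all_boot all_order all_algebra.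
From mathcomp Require Import reals.
Set Implicit Arguments. Unset Strict Implicit. Unset Printing Implicit Defensive.
Import Order.TTheory GRing.Theory Num.Theory.
Local Open Scope ring_scope.

Section Defs.
Variable R : realType.

Definition Lmat n1 n2 (eps : R) (G : 'M[R]_(n1, n2)) : 'M[R]_n1 :=
  eps%:M + diag_mx (\row_i (G *m G^T) i i).
Definition Rmat n1 n2 (eps : R) (G : 'M[R]_(n1, n2)) : 'M[R]_n2 :=
  eps%:M + diag_mx (\row_j (G^T *m G) j j).

Definition diag_quartrt n (D : 'M[R]_n) : 'M[R]_n :=
  diag_mx (\row_i Num.sqrt (Num.sqrt (D i i))).

Definition Wip n1 n2 (eps : R) (G Z Y : 'M[R]_(n1, n2)) : R :=
  \tr ((diag_quartrt (Lmat eps G) *m Z *m diag_quartrt (Rmat eps G))^T *m Y).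
Definition Wnorm n1 n2 (eps : R) (G Z : 'M[R]_(n1, n2)) : R :=
  Num.sqrt (Wip eps G Z Z).

Definition veenorm n1 n2 (Z : 'M[R]_(n1, n2)) : R :=
  Num.max (\big[Num.max/0]_(i < n1) Num.sqrt (\sum_(j < n2) Z i j ^+ 2))
          (\big[Num.max/0]_(j < n2) Num.sqrt (\sum_(i < n1) Z i j ^+ 2)).

Definition frob2 n1 n2 (Z : 'M[R]_(n1, n2)) : R := \sum_i \sum_j Z i j ^+ 2.

Definition vdot m (u v : 'cV[R]_m) : R := \sum_(i < m) u i 0 * v i 0.

Definition RIP n1 n2 m (A : {linear 'M[R]_(n1, n2) -> 'cV[R]_m}) (s : nat) (delta : R) :=
  0 < delta < 1 /\
  forall Z : 'M[R]_(n1, n2), (\rank Z <= s)%N ->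
    (1 - delta) * frob2 Z <= vdot (A Z) (A Z) <= (1 + delta) * frob2 Z.

End Defs.

(* Main.v *)
Require Import Defs.
From HB Require Import structures.
From mathcomp Require Import all_boot all_order all_algebra.
From mathcomp Require Import reals.
From mathcomp Require Import ring lra.
Import Order.TTheory GRing.Theory Num.Theory.
Local Open Scope ring_scope.

Section Helpers.
Variable R : realType.
Variables n1 n2 : nat.
Variable eps : R.
Variable G : 'M[R]_(n1, n2).

Definition wgt (i : 'I_n1) (j : 'I_n2) : R :=
  Num.sqrt (Num.sqrt (Lmat eps G i i)) * Num.sqrt (Num.sqrt (Rmat eps G j j)).

Lemma WipE (Z Y : 'M[R]_(n1, n2)) :
  Wip eps G Z Y = \sum_i \sum_j wgt i j * (Z i j * Y i j).
Proof.
rewrite /Wip /diag_quartrt mul_diag_mx mul_mx_diag /mxtrace.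
rewrite exchange_big /=; apply: eq_bigr => j _.
rewrite !mxE; apply: eq_bigr => i _; rewrite !mxE /wgt /Lmat /Rmat !mxE; ring.
Qed.

Lemma Lii i : Lmat eps G i i = eps + \sum_j G i j ^+ 2.
Proof.
rewrite /Lmat !mxE eqxx mulr1n; congr (_ + _).
by apply: eq_bigr => j _; rewrite !mxE.
Qed.

Lemma Rjj j : Rmat eps G j j = eps + \sum_i G i j ^+ 2.
Proof.
rewrite /Rmat !mxE eqxx mulr1n; congr (_ + _).
by apply: eq_bigr => i _; rewrite !mxE.
Qed.

Lemma sum_row_le i : \sum_j G i j ^+ 2 <= veenorm G ^+ 2.
Proof.
have s0 : 0 <= \sum_j G i j ^+ 2 by apply: sumr_ge0 => j _; exact: sqr_ge0.
rewrite -ler_sqrt ?sqr_ge0 // sqrtr_sqr (le_trans _ (ler_norm _)) //.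
rewrite /veenorm le_max; apply/orP; left.
exact: (le_bigmax _ (fun i0 => Num.sqrt (\sum_(j < n2) G i0 j ^+ 2)) i).
Qed.

Lemma sum_col_le j : \sum_i G i j ^+ 2 <= veenorm G ^+ 2.
Proof.
have s0 : 0 <= \sum_i G i j ^+ 2 by apply: sumr_ge0 => i _; exact: sqr_ge0.
rewrite -ler_sqrt ?sqr_ge0 // sqrtr_sqr (le_trans _ (ler_norm _)) //.
rewrite /veenorm le_max; apply/orP; right.
exact: (le_bigmax _ (fun j0 => Num.sqrt (\sum_(i < n1) G i j0 ^+ 2)) j).
Qed.

Hypothesis eps0 : 0 < eps.

Lemma qrt_mono (a b : R) : 0 <= a <= b -> Num.sqrt (Num.sqrt a) <= Num.sqrt (Num.sqrt b).
Proof.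
move=> /andP[a0 ab].
have b0 : 0 <= b by apply: le_trans ab.
by rewrite ler_sqrt ?sqrtr_ge0 // ler_sqrt.
Qed.

Lemma qrt_sq (a : R) : 0 <= a -> Num.sqrt (Num.sqrt a) * Num.sqrt (Num.sqrt a) = Num.sqrt a.
Proof. by move=> a0; rewrite -expr2 sqr_sqrtr ?sqrtr_ge0. Qed.

Lemma wgt_ge i j : Num.sqrt eps <= wgt i j.
Proof.
have e0 : 0 <= eps by exact: ltW.
rewrite -(qrt_sq _ e0) /wgt; apply: ler_pM; rewrite ?sqrtr_ge0 //; apply: qrt_mono;
  rewrite e0 ?Lii ?Rjj lerDl; apply: sumr_ge0 => k _; exact: sqr_ge0.
Qed.

Lemma wgt_le i j : wgt i j <= Num.sqrt (eps + veenorm G ^+ 2).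
Proof.
have e0 : 0 <= eps + veenorm G ^+ 2 by rewrite addr_ge0 ?sqr_ge0 ?ltW.
rewrite -(qrt_sq _ e0) /wgt; apply: ler_pM; rewrite ?sqrtr_ge0 //; apply: qrt_mono.
  rewrite Lii lerD2l sum_row_le andbT addr_ge0 ?(ltW eps0) //; apply: sumr_ge0 => k _; exact: sqr_ge0.
rewrite Rjj lerD2l sum_col_le andbT addr_ge0 ?(ltW eps0) //; apply: sumr_ge0 => k _; exact: sqr_ge0.
Qed.

Lemma wgt_gt0 i j : 0 < wgt i j.
Proof. by apply: lt_le_trans (wgt_ge i j); rewrite sqrtr_gt0. Qed.

Lemma Wip_ge0 (Z : 'M[R]_(n1, n2)) : 0 <= Wip eps G Z Z.
Proof.
rewrite WipE; apply: sumr_ge0 => i _; apply: sumr_ge0 => j _.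
by apply: mulr_ge0; [exact: ltW (wgt_gt0 _ _) | rewrite -expr2 sqr_ge0].
Qed.

Lemma Wip_lo (Z : 'M[R]_(n1, n2)) : Num.sqrt eps * frob2 Z <= Wip eps G Z Z.
Proof.
rewrite WipE /frob2 mulr_sumr; apply: ler_sum => i _; rewrite mulr_sumr.
apply: ler_sum => j _; rewrite -expr2; apply: ler_wpM2r; [exact: sqr_ge0| exact: wgt_ge].
Qed.

Lemma Wip_hi (Z : 'M[R]_(n1, n2)) : Wip eps G Z Z <= Num.sqrt (eps + veenorm G ^+ 2) * frob2 Z.
Proof.
rewrite WipE /frob2 mulr_sumr; apply: ler_sum => i _; rewrite mulr_sumr.
apply: ler_sum => j _; rewrite -expr2; apply: ler_wpM2r; [exact: sqr_ge0| exact: wgt_le].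
Qed.

Lemma WipD (U V : 'M[R]_(n1, n2)) : Wip eps G (U + V) (U + V) =
  Wip eps G U U + Wip eps G V V + 2 * Wip eps G U V.
Proof.
rewrite !WipE mulr_sumr -!big_split; apply: eq_bigr => i _.
rewrite mulr_sumr -!big_split; apply: eq_bigr => j _; rewrite !mxE; rewrite /=; ring.
Qed.

Lemma WipB (U V : 'M[R]_(n1, n2)) : Wip eps G (U - V) (U - V) =
  Wip eps G U U + Wip eps G V V - 2 * Wip eps G U V.
Proof.
rewrite !WipE mulr_sumr -!big_split -sumrB; apply: eq_bigr => i _.
rewrite mulr_sumr -!big_split -sumrB; apply: eq_bigr => j _; rewrite !mxE; rewrite /=; ring.
Qed.

Lemma WipZ (a b : R) (U V : 'M[R]_(n1, n2)) : Wip eps G (a *: U) (b *: V) = a * b * Wip eps G U V.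
Proof.
rewrite !WipE mulr_sumr; apply: eq_bigr => i _.
rewrite mulr_sumr; apply: eq_bigr => j _; rewrite !mxE; ring.
Qed.

Lemma frob2_eq0 (Z : 'M[R]_(n1, n2)) : frob2 Z = 0 -> Z = 0.
Proof.
move=> h; apply/matrixP => i j; rewrite mxE.
have := psumr_eq0P (fun i _ => sumr_ge0 _ (fun j _ => sqr_ge0 (Z i j))) h (i:=i) isT.
move=> h2; have := psumr_eq0P (fun j _ => sqr_ge0 (Z i j)) h2 (i:=j) isT.
by move/eqP; rewrite sqrf_eq0 => /eqP.
Qed.

End Helpers.

Lemma vdot_pol {R : realType} {m : nat} (a b : 'cV[R]_m) :
  vdot (a + b) (a + b) - vdot (a - b) (a - b) = 4 * vdot a b.
Proof.
rewrite /vdot -sumrB mulr_sumr; apply: eq_bigr => i _; rewrite !mxE; ring.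
Qed.

Lemma vdotZ (R : realType) m (a c : R) (u v : 'cV[R]_m) :
  vdot (a *: u) (c *: v) = a * c * vdot u v.
Proof.
rewrite /vdot mulr_sumr; apply: eq_bigr => i _; rewrite !mxE; ring.
Qed.

Lemma vdot0 (R : realType) m (v : 'cV[R]_m) : vdot 0 v = 0.
Proof. by rewrite /vdot big1 // => i _; rewrite mxE mul0r. Qed.

Lemma vdot0r (R : realType) m (v : 'cV[R]_m) : vdot v 0 = 0.
Proof. by rewrite /vdot big1 // => i _; rewrite mxE mulr0. Qed.

Lemma key {R : realType} {n1 n2 m : nat} {G : 'M[R]_(n1, n2)} {eps : R}
  {A : {linear 'M[R]_(n1, n2) -> 'cV[R]_m}} {s : nat} {delta : R}
  {U V : 'M[R]_(n1, n2)} :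
  0 < eps -> RIP A s delta -> (\rank (U + V)%R <= s)%N -> (\rank (U - V)%R <= s)%N ->
  Wip eps G U V = 0 ->
  4 * vdot (A U) (A V) <=
   (((Num.sqrt eps)^-1 - (Num.sqrt (eps + veenorm G ^+ 2))^-1) +
    ((Num.sqrt eps)^-1 + (Num.sqrt (eps + veenorm G ^+ 2))^-1) * delta)
   * (Wip eps G U U + Wip eps G V V).
Proof.
move=> e0 [/andP[d0 d1] rip] hr1 hr2 h0.
set nu := Num.sqrt eps; set mu := Num.sqrt (eps + veenorm G ^+ 2).
set S := Wip eps G U U + Wip eps G V V.
have nu0 : 0 < nu by rewrite sqrtr_gt0.
have mu0 : 0 < mu.
  by rewrite sqrtr_gt0; apply: lt_le_trans e0 _; rewrite lerDl sqr_ge0.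
have W1 : Wip eps G (U + V) (U + V) = S by rewrite WipD h0 mulr0 addr0.
have W2 : Wip eps G (U - V) (U - V) = S by rewrite WipB h0 mulr0 subr0.
have F1 : frob2 (U + V) <= nu^-1 * S.
  have -> : frob2 (U + V) = nu^-1 * (nu * frob2 (U + V)).
    by rewrite mulrA mulVf ?mul1r // gt_eqF.
  by apply: ler_wpM2l; [rewrite invr_ge0 ltW | rewrite -W1; exact: Wip_lo].
have F2 : mu^-1 * S <= frob2 (U - V).
  have -> : frob2 (U - V) = mu^-1 * (mu * frob2 (U - V)).
    by rewrite mulrA mulVf ?mul1r // gt_eqF.
  by apply: ler_wpM2l; [rewrite invr_ge0 ltW | rewrite -W2; exact: Wip_hi].
have /andP[_ hp] := rip _ hr1.
have /andP[hm _] := rip _ hr2.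
have pol := vdot_pol (A U) (A V).
rewrite -linearD -linearB in pol.
have p1 : 0 <= (1 + delta) * (nu^-1 * S - frob2 (U + V)).
  by apply: mulr_ge0; lra.
have p2 : 0 <= (1 - delta) * (frob2 (U - V) - mu^-1 * S).
  by apply: mulr_ge0; lra.
have -> : (nu^-1 - mu^-1 + (nu^-1 + mu^-1) * delta) * S =
   (1 + delta) * (nu^-1 * S) - (1 - delta) * (mu^-1 * S) by ring.
rewrite -pol.
lra.
Qed.

Theorem lemma3p8 (R : realType) (n1 n2 m : nat) (G : 'M[R]_(n1, n2)) (eps : R)
  (A : {linear 'M[R]_(n1, n2) -> 'cV[R]_m}) (Z1 Z2 : 'M[R]_(n1, n2))
  (r1 r2 : nat) (delta : R) :
  0 < eps ->
  \rank Z1 = r1 -> \rank Z2 = r2 -> (r1 + r2 <= minn n1 n2)%N ->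
  Wip eps G Z1 Z2 = 0 ->
  RIP A (r1 + r2) delta ->
  let nu := Num.sqrt eps in
  let mu := Num.sqrt (eps + veenorm G ^+ 2) in
  `|vdot (A Z1) (A Z2)| <=
    2^-1 * ((nu^-1 - mu^-1) + (nu^-1 + mu^-1) * delta)
      * Wnorm eps G Z1 * Wnorm eps G Z2.
Proof.
move=> e0 h1 h2 _ h0 rip; cbv zeta.
set nu := Num.sqrt eps; set mu := Num.sqrt (eps + veenorm G ^+ 2).
have nu0 : 0 < nu by rewrite sqrtr_gt0.
set x := Wnorm eps G Z1; set y := Wnorm eps G Z2.
have x2 : x ^+ 2 = Wip eps G Z1 Z1 by rewrite sqr_sqrtr // Wip_ge0.
have y2 : y ^+ 2 = Wip eps G Z2 Z2 by rewrite sqr_sqrtr // Wip_ge0.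
have x0 : 0 <= x by exact: sqrtr_ge0.
have y0 : 0 <= y by exact: sqrtr_ge0.
have zero_case : forall Z : 'M[R]_(n1, n2), Wnorm eps G Z = 0 -> Z = 0.
  move=> Z hz; apply: frob2_eq0.
  have hW : Wip eps G Z Z = 0 by rewrite -[LHS]sqr_sqrtr ?Wip_ge0 // -/(Wnorm eps G Z) hz expr2 mulr0.
  have hl := @Wip_lo _ _ _ _ G e0 Z; rewrite hW pmulr_rle0 // in hl.
  apply/eqP; rewrite eq_le hl /frob2; apply: sumr_ge0 => i _; apply: sumr_ge0 => j _.
  exact: sqr_ge0.
case: (eqVneq x 0) => [xz|xnz].
  by rewrite (zero_case _ xz) linear0 vdot0 normr0 xz !mulr0 mul0r.
case: (eqVneq y 0) => [yz|ynz].
  by rewrite (zero_case _ yz) linear0 vdot0r normr0 yz !mulr0.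
have xp : 0 < x by rewrite lt_def xnz.
have yp : 0 < y by rewrite lt_def ynz.
case: (rip) => dd _.
have rk : forall a b : R, (\rank (a *: Z1 + b *: Z2)%R <= r1 + r2)%N /\
                         (\rank (a *: Z1 - b *: Z2)%R <= r1 + r2)%N.
  move=> a b; split.
    apply: leq_trans (mxrank_add _ _) _; rewrite -h1 -h2.
    by apply: leq_add; apply: mxrank_scale.
  apply: leq_trans (mxrank_add _ _) _; rewrite mxrank_opp -h1 -h2.
  by apply: leq_add; apply: mxrank_scale.
have orth : forall a b : R, Wip eps G (a *: Z1) (b *: Z2) = 0.
  by move=> a b; rewrite WipZ h0 mulr0.
have k1 := key e0 rip (rk y x).1 (rk y x).2 (orth y x).
have k2 := key e0 rip (rk y (- x)).1 (rk y (- x)).2 (orth y (- x)).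
rewrite !WipZ !linearZ /= !vdotZ -x2 -y2 -/nu -/mu in k1 k2.
set c := (nu^-1 - mu^-1 + (nu^-1 + mu^-1) * delta) in k1 k2 *.
set P := vdot (A Z1) (A Z2) in k1 k2 *.
have tp : 0 < x * y by rewrite mulr_gt0.
have q1 : 0 <= (x * y) * (2 * c * (x * y) - 4 * P).
  have -> : (x * y) * (2 * c * (x * y) - 4 * P) =
    c * (y * y * x ^+ 2 + x * x * y ^+ 2) - 4 * (y * x * P) by ring.
  by rewrite subr_ge0.
have q2 : 0 <= (x * y) * (2 * c * (x * y) + 4 * P).
  have -> : (x * y) * (2 * c * (x * y) + 4 * P) =
    c * (y * y * x ^+ 2 + - x * - x * y ^+ 2) - 4 * (y * - x * P) by ring.
  by rewrite subr_ge0.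
rewrite pmulr_rge0 // in q1; rewrite pmulr_rge0 // in q2.
rewrite ler_norml -!mulrA; apply/andP; split; lra.
Qed.
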